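(* Let $k,n$ be positive integers and $\tilde n\le n$ a positive real parameter. For every $\mathsf{Path}_k$-join tree $T$ and every $\mathsf{Path}_k$-pathset $\mathcal A$, \[\chi_T(\mathcal A)\ge\tilde n^{\Psi(T)}\cdot\mu(\mathcal A).\]
   Context: Graphs are finite simple graphs without isolated vertices; $\emptyset$ is the empty graph. $\mathsf{Path}_{\mathbb Z}$ has vertex set $\mathbb Z$ and edges $\{i-1,i\}$; $\mathsf{Path}_k$ is its subgraph with vertices $0,\dots,k$ and edges $\{i-1,i\}$, $1\le i\le k$. $\Delta(G)$ = number of connected components; $G\ominus F$ = union of components of $G$ sharing no vertex with $F$; $\Delta(G\mid F):=\Delta(G\ominus F)$; $\vec\Delta(H_1,\dots,H_r)=\sum_l\Delta(H_l\ominus(H_1\cup\dots\cup H_{l-1}))$. Join trees: for $G\subseteq\mathsf{Path}_k$, a $G$-join tree is a finite rooted binary tree (each non-leaf has an ordered left and right child) with nodes labeled by subgraphs of $G$: leaves by single-edge subgraphs of $G$ or $\emptyset$, each non-leaf by the union of its children's labels, the root by $G$. $T_1\cup T_2$ is the join tree with a new root whose left subtree is $T_1$ and right subtree $T_2$. For a $G$-join tree $T$ and a root-to-leaf path $b_1,\dots,b_\ell$, let $B_j$ ($j<\ell$) be the label of the child of $b_j$ other than $b_{j+1}$ and $B_\ell$ the label of leaf $b_\ell$; $\{B_1,\dots,B_\ell\}$ is a $T$-branch covering. $\Psi(T)$ is the maximum of $\vec\Delta(C_1,\dots,C_r)$ over all $T$-branch coverings $\mathcal C$ and all enumerations $C_1,\dots,C_r$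 (without repetition) of $\mathcal C$. Relations and pathsets: a $G$-relation is a set $\mathcal A\subseteq[n]^{V(G)}$. $\mathcal A\bowtie\mathcal B=\{\gamma\in[n]^{V(G)\cup V(H)}:\gamma_{V(G)}\in\mathcal A,\ \gamma_{V(H)}\in\mathcal B\}$ for a $G$-relation $\mathcal A$ and $H$-relation $\mathcal B$. $\mu(\mathcal A)=|\mathcal A|/n^{|V(G)|}$; for a graph $F$ with $I=V(F)\cap V(G)$, $\mu(\mathcal A\mid F)=\max_{\beta\in[n]^{V(F)}}|\{\alpha\in\mathcal A:\alpha_I=\beta_I\}|/n^{|V(G)\setminus V(F)|}$. A $G$-pathset is a $G$-relation $\mathcal A$ with $\mu(\mathcal A\mid F)\le(1/\tilde n)^{\Delta(G\mid F)}$ for all $F\subseteq\mathsf{Path}_k$; $\mathscr P_G$ denotes the set of $G$-pathsets. Pathset complexity: for a $G$-join tree $T$ and $\mathcal A\in\mathscr P_G$: if $T$ is a single node, $\chi_T(\mathcal A)=0$ if $G=\emptyset$ or $\mathcal A=\emptyset$ and $1$ otherwise; if $T=T_1\cup T_2$ with $T_i$ a $G_i$-join tree, $\chi_T(\mathcal A)$ is the minimum, over finite families $\{(\mathcal A_i,\mathcal B_i,\mathcal C_i)\}_i\subseteq\mathscr P_G\times\mathscr P_{G_1}\times\mathscr P_{G_2}$ with $\mathcal A_i\subseteq\mathcal B_i\bowtie\mathcal C_i$ and $\mathcal A\subseteq\bigcup_i\mathcal A_i$, of $\sum_i\max\{\chi_{T_1}(\mathcal B_i),\chi_{T_2}(\mathcal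 C_i)\}$. *)

(* Defs.v *)
From HB Require Import structures.
From mathcomp Require Import all_boot all_order all_algebra.
From mathcomp Require Import reals.
From Stdlib Require Import ClassicalEpsilon.

Set Implicit Arguments.
Unset Strict Implicit.
Unset Printing Implicit Defensive.

Import Order.TTheory GRing.Theory Num.Theory.

(* A graph without isolated vertices is determined
   by its edge set; edge j : 'I_k is the edge {j, j+1} of Path_k
   (i.e. the paper's edge {i-1,i} with i = j+1). *)

Section Graphs.
Variable k : nat.

Definition pgraph := {set 'I_k}.

Definition verts (G : pgraph) : {set 'I_k.+1} :=
  [set v : 'I_k.+1 | [exists j in G, (nat_of_ord v == nat_of_ord j)
                                    || (nat_of_ord v == (nat_of_ord j).+1)]].

Definition adj (G : pgraph) : rel 'I_k.+1 :=
  fun u v => [exists j in G,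
     ((nat_of_ord u == nat_of_ord j) && (nat_of_ord v == (nat_of_ord j).+1))
  || ((nat_of_ord v == nat_of_ord j) && (nat_of_ord u == (nat_of_ord j).+1))].

Definition comps (G : pgraph) : {set {set 'I_k.+1}} :=
  [set [set v | connect (adj G) u v] | u in verts G].

Definition Delta (G : pgraph) : nat := #|comps G|.

(* G (-) F : union of the components of G sharing no vertex with F *)
Definition ominus (G F : pgraph) : pgraph :=
  [set j in G | [forall v, connect (adj G) (widen_ord (leqnSn k) j) v
                             ==> (v \notin verts F)]].

Definition Delta_c (G F : pgraph) : nat := Delta (ominus G F).

Fixpoint vDelta_acc (acc : pgraph) (s : seq pgraph) : nat :=
  match s with
  | [::] => 0
  | H :: s' => Delta (ominus H acc) + vDelta_acc (acc :|: H) s'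
  end.
Definition vDelta (s : seq pgraph) : nat := vDelta_acc set0 s.

Inductive jtree : Type :=
| JLeaf of option 'I_k
| JNode of jtree & jtree.

Fixpoint label (T : jtree) : pgraph :=
  match T with
  | JLeaf (Some j) => [set j]
  | JLeaf None => set0
  | JNode T1 T2 => label T1 :|: label T2
  end.

Definition join_tree_of (G : pgraph) (T : jtree) : Prop := label T = G.

Fixpoint branches (T : jtree) : seq (seq pgraph) :=
  match T with
  | JLeaf e => [:: [:: label (JLeaf e)]]
  | JNode T1 T2 =>
      [seq label T2 :: B | B <- branches T1] ++
      [seq label T1 :: B | B <- branches T2]
  end.

Definition Psi (T : jtree) : nat :=
  \max_(B <- branches T) \max_(s <- permutations (undup B)) vDelta s.

End Graphs.

(* An element of [n]^{V} (V a set of vertices of Path_k) is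
   encoded as a finite function 'I_k.+1 -> option 'I_n whose domain
   (the vertices not mapped to None) is exactly V.  ([n] = 'I_n.) *)

Section Relations.
Variables (k n : nat).

Definition asg := {ffun 'I_k.+1 -> option 'I_n}.

Definition dom (a : asg) : {set 'I_k.+1} := [set x | a x != None].

Definition is_relation (G : pgraph k) (A : {set asg}) : bool :=
  [forall a in A, dom a == verts G].

Definition restrict (S : {set 'I_k.+1}) (g : asg) : asg :=
  [ffun x => if x \in S then g x else None].

Definition bowtie (G H : pgraph k) (A B : {set asg}) : {set asg} :=
  [set g : asg | [&& dom g == verts G :|: verts H,
                     restrict (verts G) g \in A & restrict (verts H) g \in B]].

Variable R : realType.
Local Open Scope ring_scope.

Definition mu (G : pgraph k) (A : {set asg}) : R :=
  (#|A|)%:R / (n%:R ^+ #|verts G|).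

Definition mu_c (G F : pgraph k) (A : {set asg}) : R :=
  (\max_(b : asg | dom b == verts F)
      #|[set a in A | [forall x in verts F :&: verts G, a x == b x]]|)%:R
  / (n%:R ^+ #|verts G :\: verts F|).

Variable nt : R.

Definition pathset (G : pgraph k) (A : {set asg}) : Prop :=
  is_relation G A /\
  forall F : pgraph k, mu_c G F A <= (1 / nt) ^+ Delta_c G F.

(* Classical minimum of a set of naturals (0 if the set is empty;
   the sets to which it is applied below are always nonempty). *)
Definition cmin (P : nat -> Prop) : nat :=
  match excluded_middle_informative (exists m, P m) with
  | left H =>
      @ex_minn (fun m => if excluded_middle_informative (P m) then true else false)
        (let: ex_intro m Hm := H in
         ex_intro _ m (match excluded_middle_informative (P m) as b
                         return (if b then true else false) with
                       | left _ => erefl true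
                       | right hn => False_ind _ (hn Hm)
                       end))
  | right _ => 0
  end.

Fixpoint chi (T : jtree k) (A : {set asg}) : nat :=
  match T with
  | JLeaf e => if (label (JLeaf e) == set0) || (A == set0) then 0 else 1
  | JNode T1 T2 =>
      cmin (fun m => exists fam : seq ({set asg} * {set asg} * {set asg}),
        (forall t, t \in fam ->
            [/\ pathset (label (JNode T1 T2)) t.1.1,
                pathset (label T1) t.1.2,
                pathset (label T2) t.2 &
                t.1.1 \subset bowtie (label T1) (label T2) t.1.2 t.2])
        /\ A \subset \bigcup_(t <- fam) t.1.1
        /\ m = \sum_(t <- fam) maxn (chi T1 t.1.2) (chi T2 t.2))
  end.

End Relations.

Definition pathk (k : nat) : pgraph k := setT.

(* Main.v *)
Require Import Defs.
From HB Require Import structures.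
From mathcomp Require Import all_boot all_order all_algebra.
From mathcomp Require Import reals.
Import Order.TTheory GRing.Theory Num.Theory.

Set Implicit Arguments.
Unset Strict Implicit.
Unset Printing Implicit Defensive.

Local Close Scope ring_scope.


Lemma verts0 k : verts (set0 : pgraph k) = set0.
Proof. by apply/setP=> v; rewrite !inE; apply/existsP=> -[j]; rewrite inE. Qed.

Lemma vertsU k (G H : pgraph k) : verts (G :|: H) = verts G :|: verts H.
Proof.
apply/setP=> v; rewrite !inE; apply/existsP/orP.
- by case=> j /andP[]; rewrite inE => /orP[] jG P; [left|right]; apply/existsP; exists j; rewrite jG.
- by case=> /existsP[j /andP[jG P]]; exists j; rewrite inE jG ?orbT.
Qed.

Lemma verts_sub k (G H : pgraph k) : G \subset H -> verts G \subset verts H.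
Proof.
move=> sGH; apply/subsetP=> v; rewrite !inE => /existsP[j /andP[jG P]].
by apply/existsP; exists j; rewrite (subsetP sGH).
Qed.

Lemma ominus_sub k (G F : pgraph k) : ominus G F \subset G.
Proof. by apply/subsetP=> j; rewrite inE => /andP[]. Qed.

Lemma Delta0 k (F : pgraph k) : Delta (ominus set0 F) = 0%N.
Proof.
have -> : ominus set0 F = set0.
  by apply/eqP; rewrite -subset0; apply: ominus_sub.
by rewrite /Delta /comps verts0 imset0 cards0.
Qed.

Lemma Delta_le k (H : pgraph k) : (Delta H <= #|verts H|)%N.
Proof. exact: leq_imset_card. Qed.

Lemma verts_ominus k (G F : pgraph k) :
  verts (ominus G F) \subset verts G :\: verts F.
Proof.
apply/subsetP=> v; rewrite inE => /existsP[j /andP[]].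
rewrite inE => /andP[jG /forallP Hall] Hv.
have Hc : connect (adj G) (widen_ord (leqnSn k) j) v.
  case/orP: Hv => /eqP Hv.
    by rewrite (_ : v = widen_ord (leqnSn k) j) ?connect0 //; apply: val_inj.
  apply: connect1; apply/existsP; exists j; rewrite jG /=.
  by apply/orP; left; rewrite /= Hv !eqxx.
move/implyP: (Hall v) => /(_ Hc) Hn.
rewrite inE Hn /= inE.
by apply/existsP; exists j; rewrite jG.
Qed.

Lemma Delta_c_le k (G F : pgraph k) : (Delta_c G F <= #|verts G :\: verts F|)%N.
Proof.
apply: leq_trans (Delta_le _) _.
exact: subset_leq_card (verts_ominus G F).
Qed.

Local Open Scope ring_scope.


Lemma bigmax_ge_seq (R : realType) (T : eqType) (r : seq T) (f : T -> R) x :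
  x \in r -> f x <= \big[Num.max/0]_(y <- r) f y.
Proof.
elim: r => [//|y r IH]; rewrite inE big_cons => /orP[/eqP->|/IH H].
  by rewrite le_max lexx.
by rewrite le_max H orbT.
Qed.

Lemma bigmax_ge (R : realType) (T : finType) (f : T -> R) x :
  f x <= \big[Num.max/0]_(y : T) f y.
Proof. by apply: bigmax_ge_seq; rewrite mem_index_enum. Qed.

Lemma bigmax_le (R : realType) (T : finType) (f : T -> R) c :
  0 <= c -> (forall x, f x <= c) -> \big[Num.max/0]_(y : T) f y <= c.
Proof.
move=> c0 H; apply: (big_ind (fun v => v <= c)) => //.
by move=> a b Ha Hb; rewrite ge_max Ha Hb.
Qed.

Lemma bigmax_ge0 (R : realType) (T : finType) (f : T -> R) :
  0 <= \big[Num.max/0]_(y : T) f y.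
Proof.
elim: (index_enum T) => [|y r IH]; first by rewrite big_nil.
by rewrite big_cons le_max IH orbT.
Qed.

Definition filt k n (S : {set 'I_k.+1}) (x : asg k n) (A : {set asg k n}) :=
  [set a in A | [forall v in S, a v == x v]].

Fixpoint W (R : realType) k n (acc : {set 'I_k.+1}) (L : seq (bool * pgraph k))
  (A : {set asg k n}) {struct L} : R :=
  match L with
  | [::] => (A != set0)%:R
  | p :: L' =>
      if p.1 then
        (n%:R ^+ #|verts p.2 :\: acc|)^-1 *
        \sum_(x : asg k n | dom x == verts p.2 :\: acc)
           W R (acc :|: verts p.2) L' (filt (verts p.2 :\: acc) x A)
      else \big[Num.max/0]_(x : asg k n)
           W R (acc :|: verts p.2) L' (filt (verts p.2 :\: acc) x A)
  end.

Lemma W_ge0 R k n acc L (A : {set asg k n}) : 0 <= W R acc L A.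
Proof.
elim: L acc A => [|[[] Y] L IH] acc A /=; first exact: ler0n.
  apply: mulr_ge0; first by rewrite invr_ge0 exprn_ge0 // ler0n.
  by apply: sumr_ge0 => x _; apply: IH.
exact: bigmax_ge0.
Qed.

Lemma filt0 k n S (x : asg k n) : filt S x set0 = set0.
Proof. by apply/setP=> a; rewrite !inE. Qed.

Lemma W_set0 R k n acc L : W R acc L (set0 : {set asg k n}) = 0.
Proof.
elim: L acc => [|[[] Y] L IH] acc /=; first by rewrite eqxx.
  by rewrite big1 ?mulr0 // => x _; rewrite filt0 IH.
apply/le_anti; rewrite bigmax_ge0 andbT.
by apply: bigmax_le => // x; rewrite filt0 IH.
Qed.

Lemma filtU k n S (x : asg k n) A B : filt S x (A :|: B) = filt S x A :|: filt S x B.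
Proof. by apply/setP=> a; rewrite !inE andb_orl. Qed.

Lemma W_subadd R k n acc L (A B : {set asg k n}) :
  W R acc L (A :|: B) <= W R acc L A + W R acc L B.
Proof.
elim: L acc A B => [|[[] Y] L IH] acc A B /=.
- case: (A =P set0) => [->|/eqP HA]; first by rewrite set0U add0r.
  have -> : (A :|: B != set0).
    by apply: contra HA; rewrite -!subset0; apply: subset_trans; apply: subsetUl.
  by rewrite /= lerDl ler0n.
- rewrite -mulrDr; apply: ler_wpM2l; first by rewrite invr_ge0 exprn_ge0 // ler0n.
  rewrite -big_split /=; apply: ler_sum => x _.
  by rewrite filtU IH.
- apply: bigmax_le.
    by apply: addr_ge0; apply: bigmax_ge0.
  move=> x; rewrite filtU; apply: le_trans (IH _ _ _) _.
  by apply: lerD; apply: (bigmax_ge (fun x => W R _ L (filt _ x _))).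
Qed.

Lemma cmp_after R k n (V1 : {set 'I_k.+1}) L acc (A B : {set asg k n}) :
  all (fun p => p.1 ==> (verts p.2 \subset V1)) L ->
  (forall a, a \in A -> restrict V1 a \in B) ->
  W R acc L A <= W R acc L B.
Proof.
elim: L acc A B => [|[b Y] L IH] acc A B /=.
- move=> _ HAB; case: (set_0Vmem A) => [->|[a aA]]; first by rewrite eqxx ler0n.
  have -> : B != set0 by apply/set0Pn; exists (restrict V1 a); apply: HAB.
  by rewrite ler_nat leq_b1.
case: b => /=.
- move=> /andP[HY HL] HAB.
  apply: ler_wpM2l; first by rewrite invr_ge0 exprn_ge0 // ler0n.
  apply: ler_sum => x _; apply: IH => // a; rewrite !inE => /andP[aA /forallP Ha].
  rewrite HAB //=; apply/forallP => v; apply/implyP => vS.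
  have vV1 : v \in V1.
    by apply: (subsetP HY); move: vS; rewrite inE => /andP[].
  by rewrite ffunE vV1; move/implyP: (Ha v); apply.
- move=> HL HAB; apply: bigmax_le; first exact: bigmax_ge0.
  move=> x; apply: le_trans
    (bigmax_ge (fun x => W R _ L (filt (verts Y :\: acc) x B)) (restrict V1 x)).
  apply: IH => // a; rewrite !inE => /andP[aA /forallP Ha].
  rewrite HAB //=; apply/forallP => v; apply/implyP => vS.
  rewrite !ffunE; case: (v \in V1) => //.
  by move/implyP: (Ha v); apply.
Qed.

Lemma restrictT k n (a : asg k n) : restrict setT a = a.
Proof. by apply/ffunP=> v; rewrite ffunE inE. Qed.

Lemma W_mono R k n acc L (A B : {set asg k n}) :
  A \subset B -> W R acc L A <= W R acc L B.
Proof.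
move=> sAB; apply: (@cmp_after _ _ _ setT).
  by apply/allP=> p _; apply/implyP => _; apply: subsetT.
by move=> a aA; rewrite restrictT (subsetP sAB).
Qed.

Lemma W_bigcup R k n (T : Type) (fam : seq T) (F : T -> {set asg k n}) acc L (A : {set asg k n}) :
  A \subset \bigcup_(t <- fam) F t ->
  W R acc L A <= \sum_(t <- fam) W R acc L (F t).
Proof.
move=> sA; apply: le_trans (W_mono R acc L sA) _; clear sA A.
elim: fam => [|t fam IH]; first by rewrite !big_nil W_set0.
rewrite !big_cons; apply: le_trans (W_subadd R acc L _ _) _.
exact: lerD.
Qed.

Local Open Scope ring_scope.


Fixpoint vD k (acc : pgraph k) (L : seq (bool * pgraph k)) : nat :=
  match L with
  | [::] => 0
  | p :: L' => ((if p.1 then Delta (ominus p.2 acc) else 0) + vD (acc :|: p.2) L')%N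
  end.

Definition Lint k (L : seq (bool * pgraph k)) := [seq p.2 | p <- L & p.1].

Definition gacc k (acc : pgraph k) (L : seq (bool * pgraph k)) :=
  foldl (fun a p => a :|: p.2) acc L.

Lemma vD_cat k (acc : pgraph k) L1 L2 :
  vD acc (L1 ++ L2) = (vD acc L1 + vD (gacc acc L1) L2)%N.
Proof. by elim: L1 acc => [|p L1 IH] acc //=; rewrite IH addnA. Qed.

Lemma vDelta_vD k (acc : pgraph k) s :
  vDelta_acc acc s = vD acc [seq (true, Y) | Y <- s].
Proof. by elim: s acc => [|Y s IH] acc //=; rewrite IH. Qed.

Lemma dom_eq0 k n (x : asg k n) : (dom x == set0) = (x == [ffun=> None]).
Proof.
apply/eqP/eqP => [H|->].
  apply/ffunP=> v; move/setP: H => /(_ v); rewrite !inE ffunE.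
  by case: (x v).
by apply/setP=> v; rewrite !inE ffunE.
Qed.

Lemma filt_set0 k n (x : asg k n) A : filt set0 x A = A.
Proof.
by apply/setP=> a; rewrite !inE; case: (a \in A) => //=; apply/forallP=> v; rewrite inE.
Qed.

Lemma W_empty R k n acc b L (A : {set asg k n}) :
  W R acc ((b, set0) :: L) A = W R acc L A.
Proof.
rewrite /= verts0 set0D setU0.
case: b.
  rewrite cards0 expr0 invr1 mul1r (big_pred1 [ffun=> None]); last first.
    by move=> x; rewrite /= dom_eq0.
  by rewrite filt_set0.
apply/le_anti; apply/andP; split.
  by apply: bigmax_le; [exact: W_ge0| move=> x; rewrite filt_set0].
by apply: le_trans (bigmax_ge _ [ffun=> None]); rewrite filt_set0.
Qed.

Definition flipL k (G2 : pgraph k) (L : seq (bool * pgraph k)) :=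
  [seq (p.1 && (p.2 == G2), p.2) | p <- L].

Lemma W_flip R k n (G2 : pgraph k) (acc : {set 'I_k.+1}) (L : seq (bool * pgraph k)) (A : {set asg k n}) :
  (forall p, p \in L -> p.1 -> p.2 != G2 -> p.2 = set0) ->
  W R acc (flipL G2 L) A = W R acc L A.
Proof.
elim: L acc A => [//|[b Y] L IH] acc A H.
have HL : forall p, p \in L -> p.1 -> p.2 != G2 -> p.2 = set0.
  by move=> p pL; apply: H; rewrite inE pL orbT.
case E: (b && (Y != G2)).
  move/andP: E => [Hb HY].
  have HY0 : Y = set0 by apply: (H (b, Y)) => //; rewrite inE eqxx.
  have -> : flipL G2 ((b,Y)::L) = (b && (Y == G2), Y) :: flipL G2 L by [].
  rewrite HY0 !W_empty; exact: IH.
have Eb : b && (Y == G2) = b.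
  by move: E; case: (b) => //=; case: (Y == G2).
have -> : flipL G2 ((b,Y)::L) = (b && (Y == G2), Y) :: flipL G2 L by [].
rewrite Eb.
clear H; case: b {E Eb} => /=.
  by congr (_ * _); apply: eq_bigr => x _; apply: IH.
by apply: eq_bigr => x _; apply: IH.
Qed.

Lemma vD_flip k (G2 : pgraph k) (acc : pgraph k) (L : seq (bool * pgraph k)) :
  (forall p, p \in L -> p.1 -> p.2 != G2 -> p.2 = set0) ->
  vD acc (flipL G2 L) = vD acc L.
Proof.
elim: L acc => [//|[b Y] L IH] acc H.
have HL : forall p, p \in L -> p.1 -> p.2 != G2 -> p.2 = set0.
  by move=> p pL; apply: H; rewrite inE pL orbT.
rewrite /flipL /= -/(flipL G2 L) IH //.
case E: (b && (Y != G2)).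
  move/andP: E => [Hb HY].
  have HY0 : Y = set0 by apply: (H (b, Y)) => //; rewrite inE eqxx.
  by rewrite HY0 Hb !Delta0; case: (_ && _).
have Eb : b && (Y == G2) = b.
  by move: E; case: (b) => //=; case: (Y == G2).
by rewrite Eb.
Qed.

Lemma Lint_flip k (G2 : pgraph k) (L : seq (bool * pgraph k)) :
  Lint (flipL G2 L) = filter (pred1 G2) (Lint L).
Proof.
elim: L => [//|[b Y] L IH].
by rewrite /flipL /= -/(flipL G2 L); case: b => /=; rewrite -IH //=; case: (Y == G2).
Qed.

Local Open Scope ring_scope.


Definition mkb k n (i0 : 'I_n) (U : {set 'I_k.+1}) (a : asg k n) : asg k n :=
  [ffun v => if v \in U then Some (odflt i0 (a v)) else None].

Lemma dom_mkb k n (i0 : 'I_n) (U : {set 'I_k.+1}) (a : asg k n) : dom (mkb i0 U a) = U.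
Proof. by apply/setP=> v; rewrite !inE ffunE; case: (v \in U). Qed.

Lemma mkbE k n (i0 : 'I_n) (U : {set 'I_k.+1}) (a : asg k n) v :
  v \in U -> a v != None -> mkb i0 U a v = a v.
Proof. by rewrite ffunE => ->; case: (a v). Qed.

Lemma dom_in k n (a : asg k n) D v : dom a = D -> v \in D -> a v != None.
Proof. by move=> <-; rewrite inE. Qed.

Lemma dom_notin k n (a : asg k n) D v : dom a = D -> v \notin D -> a v = None.
Proof. by move=> <-; rewrite inE negbK => /eqP. Qed.

Lemma card_le_muc k n (i0 : 'I_n) (F Y : pgraph k) (A : {set asg k n}) :
  (forall a, a \in A -> dom a = verts Y) ->
  (forall a b, a \in A -> b \in A -> forall v, v \in verts F -> a v = b v) ->
  (#|A| <= \max_(b | dom b == verts F)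
        #|[set a in A | [forall x in verts F :&: verts Y, a x == b x]]|)%N.
Proof.
move=> Hdom Hag.
case: (set_0Vmem A) => [->|[a0 a0A]]; first by rewrite cards0.
apply: (leq_trans _ (leq_bigmax_cond (mkb i0 (verts F) a0) (introT eqP (dom_mkb i0 (verts F) a0)))).
apply: subset_leq_card; apply/subsetP=> a aA; rewrite inE aA /=.
apply/forallP=> v; apply/implyP; rewrite inE => /andP[vF vY].
rewrite mkbE //; last by apply: (dom_in (Hdom _ a0A)).
by rewrite (Hag a a0).
Qed.

Lemma restrict_filt k n (S : {set 'I_k.+1}) (x : asg k n) (a : asg k n) :
  dom x = S -> (forall v, v \in S -> a v = x v) -> restrict S a = x.
Proof.
move=> Hx Ha; apply/ffunP=> v; rewrite ffunE.
case: ifP => vS; first exact: Ha.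
by rewrite (dom_notin Hx) // vS.
Qed.

Lemma sum_ind_le (R : realType) k n (S : {set 'I_k.+1}) (A : {set asg k n}) :
  \sum_(x : asg k n | dom x == S) ((filt S x A != set0)%:R : R) <= #|A|%:R.
Proof.
set X := [set x : asg k n | (dom x == S) && (filt S x A != set0)].
have -> : \sum_(x : asg k n | dom x == S) ((filt S x A != set0)%:R : R)
          = (#|X|)%:R.
  rewrite -sum1_card natr_sum big_mkcond [in RHS]big_mkcond /=.
  by apply: eq_bigr => x _; rewrite inE; case: (dom x == S); case: (_ != _).
rewrite ler_nat; apply: leq_trans (leq_imset_card (restrict S) A).
apply: subset_leq_card; apply/subsetP=> x; rewrite inE => /andP[/eqP Hx /set0Pn[a]].
rewrite inE => /andP[aA /forallP Ha]; apply/imsetP; exists a => //.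
by apply/esym/restrict_filt => // v vS; apply/eqP; move/implyP: (Ha v); apply.
Qed.

Lemma pathset_sub (R : realType) k n (nt : R) (G : pgraph k) (A B : {set asg k n}) :
  A \subset B -> pathset nt G B -> pathset nt G A.
Proof.
move=> sAB [HB1 HB2]; split.
  apply/forallP=> a; apply/implyP=> aA.
  by move/forallP: HB1 => /(_ a) /implyP; apply; rewrite (subsetP sAB).
move=> F; apply: le_trans (HB2 F); rewrite /mu_c.
apply: ler_wpM2r; first by rewrite invr_ge0 exprn_ge0 // ler0n.
rewrite ler_nat; apply/bigmax_leqP=> b Hb.
apply: leq_trans (leq_bigmax_cond b Hb).
apply: subset_leq_card; apply/subsetP=> a; rewrite !inE => /andP[aA ->].
by rewrite (subsetP sAB).
Qed.

Lemma rel_dom k n (G : pgraph k) (A : {set asg k n}) (a : asg k n) :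
  is_relation G A -> a \in A -> dom a = verts G.
Proof. by move=> /forallP /(_ a) /implyP H /H /eqP. Qed.

Lemma W_ext R k n acc (L : seq (bool * pgraph k)) (A : {set asg k n}) :
  Lint L = [::] -> W R acc L A <= (A != set0)%:R.
Proof.
elim: L acc A => [|[[] Y] L IH] acc A //=.
move=> HL; apply: bigmax_le; first exact: ler0n.
move=> x; try move=> _; apply: (le_trans (IH _ _ HL)).
rewrite ler_nat; case: (set_0Vmem A) => [->|[a aA]].
  by rewrite filt0.
have -> : A != set0 by apply/set0Pn; exists a.
by rewrite leq_b1.
Qed.

Local Open Scope ring_scope.


Lemma mul_bigmax_le (R : realType) (T : finType) (f : T -> R) a c :
  0 <= c -> (forall x, a * f x <= c) -> a * \big[Num.max/0]_(y : T) f y <= c.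
Proof.
move=> c0 H; apply: (big_ind (fun v => a * v <= c)) => //; first by rewrite mulr0.
move=> u v Hu Hv; rewrite maxEle; by case: ifP.
Qed.

Lemma filt_sub k n (S : {set 'I_k.+1}) (x : asg k n) (A : {set asg k n}) : filt S x A \subset A.
Proof. by apply/subsetP=> a; rewrite inE => /andP[]. Qed.

Lemma filtP k n (S : {set 'I_k.+1}) (x : asg k n) (A : {set asg k n}) (a : asg k n) :
  a \in filt S x A -> a \in A /\ forall v, v \in S -> a v = x v.
Proof.
rewrite inE => /andP[aA /forallP H]; split => // v vS.
by apply/eqP; move/implyP: (H v); apply.
Qed.

Lemma vD_ext k (acc : pgraph k) (L : seq (bool * pgraph k)) : Lint L = [::] -> vD acc L = 0%N.
Proof. by elim: L acc => [|[[] Y] L IH] acc //= HL; rewrite IH. Qed.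

Lemma agree_filt k n (acc : {set 'I_k.+1}) (X : {set 'I_k.+1}) (x : asg k n) (A : {set asg k n}) :
  (forall a b, a \in A -> b \in A -> forall v, v \in acc -> a v = b v) ->
  (forall a b, a \in filt (X :\: acc) x A -> b \in filt (X :\: acc) x A ->
     forall v, v \in acc :|: X -> a v = b v).
Proof.
move=> H a b /filtP[aA Ha] /filtP[bA Hb] v; rewrite inE.
case vacc: (v \in acc); first by move=> _; apply: H.
move=> /= vX; have vS : v \in X :\: acc by rewrite inE vacc vX.
by rewrite Ha // Hb.
Qed.

Lemma leaf_bound (R : realType) k n (nt : R) (i0 : 'I_n) (Y : pgraph k)
  (L : seq (bool * pgraph k)) (acc : {set 'I_k.+1}) (accG : pgraph k)
  (A : {set asg k n}) :
  0 < nt -> verts accG = acc -> Lint L = [:: Y] -> pathset nt Y A ->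
  (forall a b, a \in A -> b \in A -> forall v, v \in acc -> a v = b v) ->
  nt ^+ vD accG L * W R acc L A <= (A != set0)%:R.
Proof.
move=> nt0; elim: L acc accG A => [//|[[] X] L IH] acc accG A Hacc HL HA Hag.
- case: HL => -> HL.
  have -> : vD accG ((true, Y) :: L) = Delta (ominus Y accG) by rewrite /= vD_ext // addn0.
  case: (set_0Vmem A) => [->|[a0 a0A]]; first by rewrite W_set0 /= mulr0.
  have -> : A != set0 by apply/set0Pn; exists a0.
  have HW : W R acc ((true, Y) :: L) A <= mu_c R Y accG A.
    rewrite /= /mu_c mulrC Hacc; apply: ler_wpM2r.
      by rewrite invr_ge0 exprn_ge0 // ler0n.
    apply: (@le_trans _ _ (#|A|%:R)).
      apply: le_trans (sum_ind_le R (verts Y :\: acc) A).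
      by apply: ler_sum => x _; apply: W_ext.
    rewrite ler_nat -Hacc; apply: card_le_muc => //.
      by move=> a aA; apply: rel_dom (proj1 HA) aA.
    by move=> a b aA bA v; rewrite Hacc; apply: Hag.
  apply: le_trans (ler_wpM2l (exprn_ge0 _ (ltW nt0)) (le_trans HW (proj2 HA accG))) _.
  by rewrite /Delta_c -exprMn div1r mulfV ?expr1n // gt_eqF.
- rewrite /= add0n; apply: mul_bigmax_le; first exact: ler0n.
  move=> x; apply: le_trans (IH _ _ _ _ HL _ _) _.
  + by rewrite vertsU Hacc.
  + exact: pathset_sub (filt_sub _ _ _) HA.
  + exact: agree_filt.
  rewrite ler_nat; case: (set_0Vmem A) => [->|[a aA]]; first by rewrite filt0.
  have -> : A != set0 by apply/set0Pn; exists a.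
  by rewrite leq_b1.
Qed.

Local Open Scope ring_scope.


Definition VL k (L : seq (bool * pgraph k)) : {set 'I_k.+1} :=
  \bigcup_(p <- L) verts p.2.

Lemma dom_restrict k n (S D : {set 'I_k.+1}) (a : asg k n) :
  dom a = D -> S \subset D -> dom (restrict S a) = S.
Proof.
move=> Ha sSD; apply/setP=> v; rewrite !inE ffunE.
case vS: (v \in S) => //=.
by rewrite (dom_in Ha) // (subsetP sSD).
Qed.

Lemma partition_card k n (S D : {set 'I_k.+1}) (A : {set asg k n}) :
  S \subset D -> (forall a, a \in A -> dom a = D) ->
  #|A| = (\sum_(x : asg k n | dom x == S) #|filt S x A|)%N.
Proof.
move=> sSD Hdom.
rewrite -sum1_card (partition_big (fun a => restrict S a) (fun x => dom x == S)).
  apply: eq_bigr => x /eqP Hx; rewrite -sum1_card; apply: eq_bigl => a.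
  rewrite inE; case aA: (a \in A) => //=.
  apply/eqP/forallP => [<- v|H].
    by apply/implyP=> vS; rewrite ffunE vS.
  by apply: restrict_filt => // v vS; apply/eqP; move/implyP: (H v); apply.
by move=> a aA; apply/eqP; apply: dom_restrict (Hdom a aA) sSD.
Qed.

Lemma W_top (R : realType) k n (L : seq (bool * pgraph k)) (acc : {set 'I_k.+1})
  (A : {set asg k n}) (D : {set 'I_k.+1}) :
  (0 < n)%N -> all (fun p => p.1) L ->
  (forall a, a \in A -> dom a = D) ->
  (forall a b, a \in A -> b \in A -> forall v, v \in acc -> a v = b v) ->
  D \subset acc :|: VL L -> (forall p, p \in L -> verts p.2 \subset D) ->
  #|A|%:R <= n%:R ^+ #|D :\: acc| * W R acc L A.
Proof.
move=> n0; elim: L acc A => [|[b Y] L IH] acc A /=.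
- move=> _ Hdom Hag; rewrite /VL big_nil setU0 => sD _.
  have -> : D :\: acc = set0 by apply/eqP; rewrite setD_eq0.
  rewrite cards0 expr0 mul1r.
  case: (set_0Vmem A) => [->|[a0 a0A]]; first by rewrite cards0.
  have -> : A != set0 by apply/set0Pn; exists a0.
  rewrite ler_nat; apply: leq_trans (_ : #|[set a0]| <= 1)%N; last by rewrite cards1.
  apply: subset_leq_card; apply/subsetP=> a aA; rewrite inE; apply/eqP/ffunP=> v.
  case vD: (v \in D); first by apply: Hag => //; apply: (subsetP sD).
  by rewrite (dom_notin (Hdom a aA)) ?vD // (dom_notin (Hdom a0 a0A)) ?vD.
case: b => //= HL Hdom Hag sD HLD.
have sYD : verts Y \subset D by apply: (HLD (true, Y)); rewrite inE eqxx.
set S := verts Y :\: acc.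
have sSD : S \subset D by apply: subset_trans sYD; apply: subsetDl.
have Hcard : #|D :\: acc| = (#|S| + #|D :\: (acc :|: verts Y)|)%N.
  rewrite -(cardsID (verts Y) (D :\: acc)) setDDl; congr (_ + _)%N.
  apply: eq_card => v; rewrite in_setI !in_setD.
  case vY: (v \in verts Y); last by rewrite !andbF.
  by rewrite (subsetP sYD _ vY) !andbT.
rewrite Hcard exprD mulrAC mulVKf; last by rewrite expf_neq0 // pnatr_eq0 -lt0n.
rewrite mulrC (partition_card sSD Hdom) natr_sum mulr_sumr; apply: ler_sum => x _.
apply: IH => //.
- by move=> a /filtP[aA _]; apply: Hdom.
- exact: agree_filt.
- by move: sD; rewrite /VL big_cons setUA.
- by move=> p pL; apply: HLD; rewrite inE pL orbT.
Qed.

Local Open Scope ring_scope.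


Lemma sum_ind_le_gen (R : realType) k n (S : {set 'I_k.+1}) (A Z : {set asg k n}) :
  (forall x, dom x = S -> filt S x A != set0 -> exists2 z, z \in Z & x = restrict S z) ->
  \sum_(x : asg k n | dom x == S) ((filt S x A != set0)%:R : R) <= #|Z|%:R.
Proof.
move=> HZ.
set X := [set x : asg k n | (dom x == S) && (filt S x A != set0)].
have -> : \sum_(x : asg k n | dom x == S) ((filt S x A != set0)%:R : R)
          = (#|X|)%:R.
  rewrite -sum1_card natr_sum big_mkcond [in RHS]big_mkcond /=.
  by apply: eq_bigr => x _; rewrite inE; case: (dom x == S); case: (_ != _).
rewrite ler_nat; apply: leq_trans (leq_imset_card (restrict S) Z).
apply: subset_leq_card; apply/subsetP=> x; rewrite inE => /andP[/eqP Hx HA].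
by case: (HZ x Hx HA) => z zZ ->; apply/imsetP; exists z.
Qed.

Lemma mu_c_ge0 (R : realType) k n (G F : pgraph k) (C : {set asg k n}) :
  0 <= mu_c R G F C.
Proof. by apply: divr_ge0; [exact: ler0n | apply: exprn_ge0; exact: ler0n]. Qed.

Lemma rel_int k n (V1 S : {set 'I_k.+1}) (x : asg k n) (A B : {set asg k n}) (a : asg k n) :
  S \subset V1 -> (forall a, a \in A -> restrict V1 a \in B) ->
  a \in filt S x A -> restrict V1 a \in filt S x B.
Proof.
move=> sS HAB /filtP[aA Ha]; rewrite inE HAB //=.
apply/forallP=> v; apply/implyP=> vS.
by rewrite ffunE (subsetP sS _ vS) Ha.
Qed.

Lemma rel_ext k n (V1 S : {set 'I_k.+1}) (x : asg k n) (A B : {set asg k n}) (a : asg k n) :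
  (forall a, a \in A -> restrict V1 a \in B) ->
  a \in filt S x A -> restrict V1 a \in filt S (restrict V1 x) B.
Proof.
move=> HAB /filtP[aA Ha]; rewrite inE HAB //=.
apply/forallP=> v; apply/implyP=> vS.
by rewrite !ffunE; case: (v \in V1); rewrite // Ha.
Qed.

Lemma cmp_mid (R : realType) k n (i0 : 'I_n) (V1 V2 : {set 'I_k.+1})
  (G2 accG : pgraph k) (acc : {set 'I_k.+1}) (L2 : seq (bool * pgraph k))
  (A' B C : {set asg k n}) :
  verts G2 = V2 -> verts accG = acc ->
  all (fun p => p.1 ==> (verts p.2 \subset V1)) L2 ->
  (forall a, a \in A' -> [/\ dom a = V1 :|: V2, restrict V1 a \in B & restrict V2 a \in C]) ->
  (forall a b, a \in A' -> b \in A' -> forall v, v \in acc -> a v = b v) ->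
  W R acc ((true, G2) :: L2) A' <= mu_c R G2 accG C * W R acc ((false, G2) :: L2) B.
Proof.
move=> HV2 Hacc HL2 Hrel Hag.
case: (set_0Vmem A') => [->|[a0 a0A]].
  by rewrite W_set0; apply: mulr_ge0; [exact: mu_c_ge0 | exact: W_ge0].
set S := verts G2 :\: acc.
set Wm := W R acc ((false, G2) :: L2) B.
have HWm : 0 <= Wm by exact: W_ge0.
have Hterm : forall x, W R (acc :|: verts G2) L2 (filt S x A') <=
                       (filt S x A' != set0)%:R * Wm.
  move=> x; case: (set_0Vmem (filt S x A')) => [->|[a aF]].
    by rewrite W_set0 eqxx mul0r.
  have -> : filt S x A' != set0 by apply/set0Pn; exists a.
  rewrite mul1r; apply: le_trans
    (bigmax_ge (fun x => W R (acc :|: verts G2) L2 (filt S x B)) (restrict V1 x)).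
  apply: (@cmp_after _ _ _ V1) => // b bF.
  apply: rel_ext bF => c cA; by case: (Hrel c cA).
set Cb := [set c in C | [forall v in verts accG :&: verts G2,
                           c v == mkb i0 (verts accG) a0 v]].
have HX : \sum_(x : asg k n | dom x == S) ((filt S x A' != set0)%:R : R) <= #|Cb|%:R.
  apply: sum_ind_le_gen => x Hx /set0Pn[a aF].
  have [aA Ha] := filtP aF.
  have [Hda HaB HaC] := Hrel a aA.
  exists (restrict V2 a).
    rewrite inE HaC /=; apply/forallP=> v; apply/implyP; rewrite inE => /andP[vF vG].
    rewrite -HV2 ffunE vG mkbE //.
      by rewrite (Hag a a0) // -Hacc.
    have [Hd0 _ _] := Hrel a0 a0A.
    by apply: (dom_in Hd0); rewrite inE -HV2 vG orbT.
  apply/esym/restrict_filt => // v vS; rewrite ffunE.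
  have vV2 : v \in V2 by rewrite -HV2; move: vS; rewrite inE => /andP[].
  by rewrite vV2 Ha.
have HCb : (#|Cb| <= \max_(b | dom b == verts accG)
        #|[set a in C | [forall x in verts accG :&: verts G2, a x == b x]]|)%N.
  exact: (leq_bigmax_cond (mkb i0 (verts accG) a0) (introT eqP (dom_mkb i0 (verts accG) a0))).
rewrite {1}/W -/W /= -/S.
have -> : mu_c R G2 accG C = (\max_(b | dom b == verts accG)
        #|[set a in C | [forall x in verts accG :&: verts G2, a x == b x]]|)%:R
        * (n%:R ^+ #|verts G2 :\: verts accG|)^-1 by [].
rewrite Hacc -/S mulrAC [X in _ <= X]mulrC; apply: ler_wpM2l.
  by rewrite invr_ge0 exprn_ge0 // ler0n.
apply: le_trans (ler_sum _ (fun x _ => Hterm x)) _.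
rewrite -mulr_suml; apply: ler_wpM2r => //.
apply: le_trans HX _; rewrite ler_nat -Hacc; exact: HCb.
Qed.

Lemma cmp_before (R : realType) k n (i0 : 'I_n) (V1 V2 : {set 'I_k.+1})
  (G2 : pgraph k) (L1 L2 : seq (bool * pgraph k)) (accG : pgraph k) (acc : {set 'I_k.+1})
  (A' B C : {set asg k n}) :
  verts G2 = V2 -> verts accG = acc ->
  all (fun p => p.1 ==> (verts p.2 \subset V1)) L1 ->
  all (fun p => p.1 ==> (verts p.2 \subset V1)) L2 ->
  (forall a, a \in A' -> [/\ dom a = V1 :|: V2, restrict V1 a \in B & restrict V2 a \in C]) ->
  (forall a b, a \in A' -> b \in A' -> forall v, v \in acc -> a v = b v) ->
  W R acc (L1 ++ (true, G2) :: L2) A' <=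
    mu_c R G2 (gacc accG L1) C * W R acc (L1 ++ (false, G2) :: L2) B.
Proof.
move=> HV2; elim: L1 accG acc A' B => [|[b Y] L1 IH] accG acc A' B Hacc HL1 HL2 Hrel Hag.
  exact: (cmp_mid R i0 HV2 Hacc HL2 Hrel Hag).
case: b HL1 => /= HL1.
- move/andP: HL1 => [HY HL1].
  rewrite mulrCA; apply: ler_wpM2l; first by rewrite invr_ge0 exprn_ge0 // ler0n.
  rewrite mulr_sumr; apply: ler_sum => x _; apply: IH => //.
  + by rewrite vertsU Hacc.
  + move=> a aF; have [aA _] := filtP aF; have [H1 H2 H3] := Hrel a aA; split => //.
    apply: (rel_int (A := A')) aF => //; first by apply: subset_trans HY; apply: subsetDl.
    by move=> c cA; have [] := Hrel c cA.
  + exact: agree_filt.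
- apply: bigmax_le.
    by apply: mulr_ge0; [exact: mu_c_ge0 | exact: bigmax_ge0].
  move=> x.
  have := IH (accG :|: Y) (acc :|: verts Y) (filt (verts Y :\: acc) x A')
              (filt (verts Y :\: acc) (restrict V1 x) B).
  move=> H; try move=> _; apply: le_trans (H _ _ _ _ _) _.
  + by rewrite vertsU Hacc.
  + exact: HL1.
  + exact: HL2.
  + move=> a aF; have [aA _] := filtP aF; have [H1 H2 H3] := Hrel a aA; split => //.
    apply: (rel_ext (A := A')) aF.
    by move=> c cA; have [] := Hrel c cA.
  + exact: agree_filt.
  apply: ler_wpM2l; first exact: mu_c_ge0.
  exact: (bigmax_ge (fun x => W R _ _ (filt (verts Y :\: acc) x B))).
Qed.

From Stdlib Require Import ClassicalEpsilon.
Local Open Scope ring_scope.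


Lemma pow_bound (R : realType) (nt : R) (n m d M : nat) :
  (0 < n)%N -> 0 < nt -> nt <= n%:R -> (M <= 1)%N -> (d <= m)%N ->
  M%:R / n%:R ^+ m <= (1 / nt) ^+ d.
Proof.
move=> n0 nt0 ntn M1 dm.
have n0' : 0 < (n%:R : R) by rewrite ltr0n.
apply: (@le_trans _ _ ((n%:R^-1) ^+ m)).
  rewrite exprVn -[X in _ <= X]mul1r; apply: ler_wpM2r.
    by rewrite invr_ge0 exprn_ge0 // ltW.
  by rewrite (_ : 1 = 1%:R) // ler_nat.
have i0 : 0 <= (n%:R : R)^-1 by rewrite invr_ge0 ltW.
have i1 : (n%:R : R)^-1 <= 1 by rewrite invf_le1 // (ler_nat R 1 n).
case: (lerP 1 nt) => h.
  apply: le_trans (ler_wiXn2l i0 i1 dm) _.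
  apply: lerXn2r; rewrite ?nnegrE //; first by rewrite div1r invr_ge0 ltW.
  by rewrite div1r lef_pV2 ?posrE.
apply: le_trans (exprn_ile1 _ i0 i1) _.
by apply: exprn_ege1; rewrite div1r invf_ge1 // ltW.
Qed.

Lemma pathset_single (R : realType) (nt : R) k n (G : pgraph k) (a : asg k n) :
  (0 < n)%N -> 0 < nt -> nt <= n%:R -> dom a = verts G -> pathset nt G [set a].
Proof.
move=> n0 nt0 ntn Ha; split.
  by apply/forallP=> b; apply/implyP; rewrite inE => /eqP ->; rewrite Ha.
move=> F; rewrite /mu_c; apply: pow_bound => //; last exact: Delta_c_le.
apply/bigmax_leqP=> b _; rewrite -(cards1 a); apply: subset_leq_card.
by apply/subsetP=> c; rewrite inE => /andP[].
Qed.

Lemma cmin_spec (P : nat -> Prop) : (exists m, P m) -> P (cmin P).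
Proof.
move=> Hex; rewrite /cmin; case: excluded_middle_informative => [H|H]; last by case: (H Hex).
case: ex_minnP => m Hm _; move: Hm; case: excluded_middle_informative => //.
Qed.

Fixpoint gbr k (T : jtree k) : seq (seq (pgraph k)) :=
  match T with
  | JLeaf e => [:: [:: label (JLeaf e)]]
  | JNode T1 T2 => [:: label (JNode T1 T2)] ::
      ([seq label T2 :: B | B <- gbr T1] ++ [seq label T1 :: B | B <- gbr T2])
  end.

Lemma branches_gbr k (T : jtree k) B : B \in branches T -> B \in gbr T.
Proof.
elim: T B => [e|T1 IH1 T2 IH2] B //=.
rewrite mem_cat inE => /orP[] /mapP[B' HB' ->]; rewrite mem_cat; apply/orP/or_intror.
  by apply/orP; left; apply/mapP; exists B' => //; apply: IH1.
by apply/orP; right; apply/mapP; exists B' => //; apply: IH2.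
Qed.

Lemma gbr_sub k (T : jtree k) B Y : B \in gbr T -> Y \in B -> Y \subset label T.
Proof.
elim: T B => [e|T1 IH1 T2 IH2] B /=.
  by rewrite inE => /eqP -> ; rewrite inE => /eqP ->.
rewrite inE => /orP[/eqP ->|]; first by rewrite inE => /eqP ->.
rewrite mem_cat => /orP[] /mapP[B' HB' ->]; rewrite inE => /orP[/eqP->|YB].
- exact: subsetUr.
- by apply: subset_trans (IH1 _ HB' YB) _; apply: subsetUl.
- exact: subsetUl.
- by apply: subset_trans (IH2 _ HB' YB) _; apply: subsetUr.
Qed.

Lemma branches_cover k (T : jtree k) B j : B \in branches T -> j \in label T ->
  exists2 Y, Y \in B & j \in Y.
Proof.
elim: T B => [e|T1 IH1 T2 IH2] B /=.
  by rewrite inE => /eqP -> Hj; exists (label (JLeaf e)); rewrite ?inE.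
rewrite mem_cat => /orP[] /mapP[B' HB' ->]; rewrite inE => /orP[] Hj.
- by have [Y YB jY] := IH1 _ HB' Hj; exists Y => //; rewrite inE YB orbT.
- by exists (label T2); rewrite ?inE ?eqxx.
- by exists (label T1); rewrite ?inE ?eqxx.
- by have [Y YB jY] := IH2 _ HB' Hj; exists Y => //; rewrite inE YB orbT.
Qed.

Local Open Scope ring_scope.


Lemma bowtieP k n (G H : pgraph k) (A B : {set asg k n}) g :
  g \in bowtie G H A B ->
  [/\ dom g = verts G :|: verts H, restrict (verts G) g \in A & restrict (verts H) g \in B].
Proof. by rewrite inE => /and3P[/eqP]. Qed.

Lemma chi_node (R : realType) (nt : R) k n (T1 T2 : jtree k) (A : {set asg k n}) :
  (0 < n)%N -> 0 < nt -> nt <= n%:R -> is_relation (label (JNode T1 T2)) A ->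
  exists fam : seq ({set asg k n} * {set asg k n} * {set asg k n}),
    [/\ (forall t, t \in fam ->
            [/\ pathset nt (label (JNode T1 T2)) t.1.1,
                pathset nt (label T1) t.1.2,
                pathset nt (label T2) t.2 &
                t.1.1 \subset bowtie (label T1) (label T2) t.1.2 t.2]),
        A \subset \bigcup_(t <- fam) t.1.1 &
        chi nt (JNode T1 T2) A = (\sum_(t <- fam) maxn (chi nt T1 t.1.2) (chi nt T2 t.2))%N].
Proof.
move=> n0 nt0 ntn HA.
set P := (fun m => exists fam : seq ({set asg k n} * {set asg k n} * {set asg k n}),
        (forall t, t \in fam ->
            [/\ pathset nt (label (JNode T1 T2)) t.1.1,
                pathset nt (label T1) t.1.2,
                pathset nt (label T2) t.2 &
                t.1.1 \subset bowtie (label T1) (label T2) t.1.2 t.2])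
        /\ A \subset \bigcup_(t <- fam) t.1.1
        /\ m = (\sum_(t <- fam) maxn (chi nt T1 t.1.2) (chi nt T2 t.2))%N).
have -> : chi nt (JNode T1 T2) A = cmin P by [].
have : P (cmin P).
  apply: cmin_spec.
  set V1 := verts (label T1); set V2 := verts (label T2).
  set fam := [seq ([set a], [set restrict V1 a], [set restrict V2 a]) | a <- enum A].
  exists (\sum_(t <- fam) maxn (chi nt T1 t.1.2) (chi nt T2 t.2))%N, fam.
  split; last split => //.
    move=> t /mapP[a]; rewrite mem_enum => aA -> /=.
    have Hda : dom a = V1 :|: V2 by rewrite (rel_dom HA aA) /= vertsU.
    split.
    + by apply: pathset_single => //; rewrite Hda /= vertsU.
    + by apply: pathset_single => //; apply: (dom_restrict Hda); apply: subsetUl.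
    + by apply: pathset_single => //; apply: (dom_restrict Hda); apply: subsetUr.
    + apply/subsetP=> b; rewrite inE => /eqP ->; rewrite inE Hda eqxx /=.
      by rewrite !inE !eqxx.
  apply/subsetP=> a aA; rewrite bigcup_seq; apply/bigcupP.
  exists ([set a], [set restrict V1 a], [set restrict V2 a]); last by rewrite inE.
  by apply/mapP; exists a; rewrite ?mem_enum.
by case=> fam [H1 [H2 H3]]; exists fam; split.
Qed.

Lemma sum_ge_elem (T : eqType) (s : seq T) (F : T -> nat) x :
  x \in s -> (F x <= \sum_(y <- s) F y)%N.
Proof. by move=> xs; rewrite (big_rem x xs) /= leq_addr. Qed.

Lemma chi_ge1 (R : realType) (nt : R) k n (T : jtree k) (A : {set asg k n}) :
  (0 < n)%N -> 0 < nt -> nt <= n%:R -> label T != set0 ->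
  is_relation (label T) A -> A != set0 -> (1 <= chi nt T A)%N.
Proof.
move=> n0 nt0 ntn; elim: T A => [e|T1 IH1 T2 IH2] A HT HA HA0.
  by rewrite /= (negbTE HT) (negbTE HA0).
have [fam [H1 H2 ->]] := chi_node n0 nt0 ntn HA.
case/set0Pn: HA0 => a aA.
move/subsetP: H2 => /(_ a aA); rewrite bigcup_seq => /bigcupP[t tf at1].
have [_ P1 P2 Hb] := H1 t tf.
have [_ rB rC] := bowtieP (subsetP Hb a at1).
apply: leq_trans (sum_ge_elem (fun t => maxn (chi nt T1 t.1.2) (chi nt T2 t.2)) tf).
case E1: (label T1 == set0).
  have HT2 : label T2 != set0.
    by apply: contra HT => /eqP E2; rewrite /= (eqP E1) E2 setU0.
  apply: leq_trans (IH2 _ HT2 (proj1 P2) _) (leq_maxr _ _).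
  by apply/set0Pn; exists (restrict (verts (label T2)) a).
apply: leq_trans (IH1 _ (negbT E1) (proj1 P1) _) (leq_maxl _ _).
by apply/set0Pn; exists (restrict (verts (label T1)) a).
Qed.

Local Open Scope ring_scope.


Definition valid k (T : jtree k) (L : seq (bool * pgraph k)) :=
  exists2 B, B \in gbr T & perm_eq (Lint L) (undup B).

Definition IHprop (R : realType) (nt : R) k n (T : jtree k) :=
  forall (L : seq (bool * pgraph k)) (A : {set asg k n}),
    label T != set0 -> valid T L -> pathset nt (label T) A ->
    nt ^+ vD set0 L * W R set0 L A <= (chi nt T A)%:R.

Lemma Lint_mem k (L : seq (bool * pgraph k)) Y : Y \in Lint L -> (true, Y) \in L.
Proof.
case/mapP=> [[b Z]]; rewrite mem_filter /= => /andP[Hb HZ] ->.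
by move: Hb HZ; case: b.
Qed.

Lemma Lint_in k (L : seq (bool * pgraph k)) (b : bool) Y : (b, Y) \in L -> b -> Y \in Lint L.
Proof.
move=> pL Hb; apply/mapP; exists (b, Y) => //.
by rewrite mem_filter pL andbT.
Qed.

Lemma all_Lint k (L : seq (bool * pgraph k)) (V1 : {set 'I_k.+1}) :
  (forall Y, Y \in Lint L -> verts Y \subset V1) ->
  all (fun p => p.1 ==> (verts p.2 \subset V1)) L.
Proof.
move=> H; apply/allP=> [[b Y]] pL /=; apply/implyP=> Hb; apply: H.
exact: Lint_in pL Hb.
Qed.

Lemma gbr_self k (T : jtree k) : [:: label T] \in gbr T.
Proof. by case: T => [e|T1 T2] /=; rewrite inE eqxx. Qed.

Lemma perm_eq1 (T : eqType) (s : seq T) x : perm_eq s [:: x] -> s = [:: x].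
Proof.
move=> H; have := perm_size H; case: s H => [|y [|z s]] //= H _.
by have := perm_mem H y; rewrite !inE eqxx => /esym /eqP ->.
Qed.

Lemma Lint_ct k (L : seq (bool * pgraph k)) Y : Lint ((true, Y) :: L) = Y :: Lint L.
Proof. by []. Qed.
Lemma Lint_cf k (L : seq (bool * pgraph k)) Y : Lint ((false, Y) :: L) = Lint L.
Proof. by []. Qed.

Lemma Lint_cat k (L1 L2 : seq (bool * pgraph k)) : Lint (L1 ++ L2) = Lint L1 ++ Lint L2.
Proof. by rewrite /Lint filter_cat map_cat. Qed.

Lemma side (R : realType) (nt : R) k n (i0 : 'I_n) (U U' : jtree k) (B1 : seq (pgraph k))
  (L : seq (bool * pgraph k)) (A' Bu Bu' : {set asg k n}) :
  0 < nt -> @IHprop R nt k n U -> @IHprop R nt k n U' ->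
  label U :|: label U' != set0 -> B1 \in gbr U ->
  perm_eq (Lint L) (undup (label U' :: B1)) ->
  pathset nt (label U) Bu -> pathset nt (label U') Bu' ->
  (forall a, a \in A' -> [/\ dom a = verts (label U) :|: verts (label U'),
                           restrict (verts (label U)) a \in Bu &
                           restrict (verts (label U')) a \in Bu']) ->
  nt ^+ vD set0 L * W R set0 L A' <= (maxn (chi nt U Bu) (chi nt U' Bu'))%:R.
Proof.
move=> nt0 IHU IHU' HUU' HB1 Hperm PBu PBu' Hrel.
set G1 := label U; set G2 := label U'.
have HuniqL : uniq (Lint L) by rewrite (perm_uniq Hperm) undup_uniq.
have HG2L : G2 \in Lint L by rewrite (perm_mem Hperm) mem_undup inE eqxx.
have HLmem : forall Y, Y \in Lint L -> Y = G2 \/ Y \in B1.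
  move=> Y; rewrite (perm_mem Hperm) mem_undup inE => /orP[/eqP->|]; by [left|right].
case E1: (G1 == set0).
- (* the branch side has an empty label: go through U' *)
  have HG2 : G2 != set0 by apply: contra HUU'; rewrite -/G1 -/G2 (eqP E1) set0U.
  have HB10 : forall Y, Y \in B1 -> Y = set0.
    by move=> Y YB; apply/eqP; rewrite -subset0 -(eqP E1); apply: gbr_sub HB1 YB.
  have Hflip : forall p, p \in L -> p.1 -> p.2 != G2 -> p.2 = set0.
    move=> [b Y] pL /= Hb HY.
    have : Y \in Lint L by apply: Lint_in pL Hb.
    by case/HLmem => [E|]; [rewrite E eqxx in HY | apply: HB10].
  rewrite -(vD_flip set0 Hflip) -(W_flip R set0 A' Hflip).
  apply: le_trans (_ : _ <= (chi nt U' Bu')%:R) _; last by rewrite ler_nat leq_maxr.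
  apply: le_trans (IHU' (flipL G2 L) Bu' HG2 _ PBu'); last first.
    exists [:: label U']; first exact: gbr_self.
    by rewrite Lint_flip filter_pred1_uniq.
  apply: ler_wpM2l; first by rewrite exprn_ge0 // ltW.
  apply: (@cmp_after _ _ _ (verts G2)).
    apply: all_Lint => Y; rewrite Lint_flip mem_filter => /andP[/eqP -> _].
    exact: subxx.
  by move=> a aA; have [] := Hrel a aA.
have HG1 : G1 != set0 by rewrite E1.
case E2: (G2 \in B1).
-
  have Hperm' : perm_eq (Lint L) (undup B1) by move: Hperm; rewrite /= E2.
  apply: le_trans (_ : _ <= (chi nt U Bu)%:R) _; last by rewrite ler_nat leq_maxl.
  apply: le_trans (IHU L Bu HG1 _ PBu); last by exists B1.
  apply: ler_wpM2l; first by rewrite exprn_ge0 // ltW.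
  apply: (@cmp_after _ _ _ (verts G1)).
    apply: all_Lint => Y; rewrite (perm_mem Hperm') mem_undup => YB.
    by apply: verts_sub; apply: gbr_sub HB1 YB.
  by move=> a aA; have [] := Hrel a aA.
have HLm := Lint_mem HG2L; move: Hperm HuniqL HLmem HG2L.
case/splitPr: HLm => L1 L2 Hperm HuniqL HLmem HG2L.
have Hperm' : perm_eq (Lint (L1 ++ (false, G2) :: L2)) (undup B1).
  move: Hperm; rewrite /= E2 !Lint_cat Lint_ct Lint_cf -cat1s perm_catCA /= perm_cons.
  by [].
have HsubB : forall Y, Y \in Lint L1 ++ Lint L2 -> verts Y \subset verts G1.
  move=> Y; rewrite -(Lint_cf L2 G2) -Lint_cat (perm_mem Hperm').
  by rewrite mem_undup => YB; apply: verts_sub; apply: gbr_sub HB1 YB.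
have HL1 : all (fun p => p.1 ==> (verts p.2 \subset verts G1)) L1.
  by apply: all_Lint => Y YL; apply: HsubB; rewrite mem_cat YL.
have HL2 : all (fun p => p.1 ==> (verts p.2 \subset verts G1)) L2.
  by apply: all_Lint => Y YL; apply: HsubB; rewrite mem_cat YL orbT.
have Hag0 : forall a b, a \in A' -> b \in A' -> forall v, v \in (set0 : {set 'I_k.+1}) -> a v = b v.
  by move=> a b _ _ v; rewrite inE.
have Hcmp := cmp_before R i0 (erefl (verts G2)) (verts0 k) HL1 HL2 Hrel Hag0.
have HvD : vD set0 (L1 ++ (true, G2) :: L2) =
           (vD set0 (L1 ++ (false, G2) :: L2) + Delta (ominus G2 (gacc set0 L1)))%N.
  by rewrite !vD_cat /= add0n addnA addnAC.
rewrite HvD exprD -mulrA.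
apply: le_trans (_ : _ <= (chi nt U Bu)%:R) _; last by rewrite ler_nat leq_maxl.
apply: le_trans (IHU (L1 ++ (false, G2) :: L2) Bu HG1 _ PBu); last by exists B1.
apply: ler_wpM2l; first by rewrite exprn_ge0 // ltW.
apply: le_trans (ler_wpM2l (exprn_ge0 _ (ltW nt0)) Hcmp) _.
rewrite mulrA -[X in _ <= X]mul1r; apply: ler_wpM2r; first exact: W_ge0.
have := proj2 PBu' (gacc set0 L1); rewrite /Delta_c => Hmu.
apply: le_trans (ler_wpM2l (exprn_ge0 _ (ltW nt0)) Hmu) _.
by rewrite -exprMn div1r mulfV ?expr1n // gt_eqF.
Qed.

Local Open Scope ring_scope.


Lemma main (R : realType) (nt : R) k n (i0 : 'I_n) :
  0 < nt -> nt <= n%:R -> forall T : jtree k, @IHprop R nt k n T.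
Proof.
move=> nt0 ntn.
have n0 : (0 < n)%N by case: i0 => i /=; case: n {ntn} => //.
have Hag0 : forall (A : {set asg k n}) a b, a \in A -> b \in A ->
    forall v, v \in (set0 : {set 'I_k.+1}) -> a v = b v.
  by move=> A a b _ _ v; rewrite inE.
elim=> [e|T1 IH1 T2 IH2] L A HT [B HB Hperm] HA.
  move: HB; rewrite inE => /eqP HB; subst B.
  have HL := perm_eq1 Hperm.
  apply: le_trans (leaf_bound (R:=R) i0 nt0 (verts0 k) HL HA (Hag0 A)) _.
  by rewrite /= (negbTE HT); case: (A == set0).
have [fam [H1 H2 ->]] := chi_node n0 nt0 ntn (proj1 HA).
apply: le_trans (ler_wpM2l (exprn_ge0 _ (ltW nt0)) (W_bigcup R set0 L H2)) _.
rewrite mulr_sumr natr_sum !big_seq; apply: ler_sum => t tf.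
have [P0 P1 P2 Hb] := H1 t tf.
have Hrel := fun a (aA : a \in t.1.1) => bowtieP (subsetP Hb a aA).
move: HB; rewrite inE => /orP[/eqP HB|].
  subst B; have HL := perm_eq1 Hperm.
  apply: le_trans (leaf_bound (R:=R) i0 nt0 (verts0 k) HL P0 (Hag0 _)) _.
  case: (set_0Vmem t.1.1) => [->|[a aA]]; first by rewrite eqxx ler0n.
  have -> : t.1.1 != set0 by apply/set0Pn; exists a.
  have [_ rB rC] := Hrel a aA.
  rewrite (_ : 1 = 1%:R) // ler_nat.
  case E1: (label T1 == set0).
    have HT2 : label T2 != set0.
      by apply: contra HT => /eqP E2; rewrite /= (eqP E1) E2 setU0.
    apply: leq_trans (leq_maxr _ _); apply: chi_ge1 => //; first exact: (proj1 P2).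
    by apply/set0Pn; eexists; exact: rC.
  apply: leq_trans (leq_maxl _ _); apply: chi_ge1 => //; first by rewrite E1.
    exact: (proj1 P1).
  by apply/set0Pn; eexists; exact: rB.
rewrite mem_cat => /orP[] /mapP[B1 HB1 HBe]; subst B.
  exact: (side i0 nt0 IH1 IH2 HT HB1 Hperm P1 P2 Hrel).
rewrite maxnC; apply: (side i0 nt0 IH2 IH1 _ HB1 Hperm P2 P1).
  by rewrite setUC.
by move=> a aA; have [Hd rB rC] := Hrel a aA; split => //; rewrite setUC.
Qed.

Local Open Scope ring_scope.

Lemma bigmax_attained (T : eqType) (r : seq T) (f : T -> nat) :
  (0 < size r)%N -> exists2 x, x \in r & \max_(y <- r) f y = f x.
Proof.
elim: r => [//|x r IH] _; rewrite big_cons.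
case: r IH => [|y r] IH.
  by exists x; rewrite ?inE ?eqxx // big_nil maxn0.
have [z zr ->] := IH isT.
case: (leqP (f x) (f z)) => h.
  by exists z; rewrite // inE zr orbT.
by exists x; rewrite // inE eqxx.
Qed.

Lemma branches_size k (T : jtree k) : (0 < size (branches T))%N.
Proof. by elim: T => [e|T1 IH1 T2 IH2] //=; rewrite size_cat size_map addn_gt0 IH1. Qed.

Unset Implicit Arguments.

Theorem lemma6p10 (R : realType) (k n : nat) (nt : R) :
  (0 < k)%N -> (0 < n)%N -> 0 < nt -> nt <= n%:R ->
  forall (T : jtree k) (A : {set asg k n}),
    join_tree_of (pathk k) T ->
    pathset nt (pathk k) A ->
    nt ^+ Psi T * mu R (pathk k) A <= (chi nt T A)%:R.
Proof.
move=> k0 n0 nt0 ntn T A HT HA.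
pose i0 : 'I_n := Ordinal n0.
have [B HB EB] := bigmax_attained
  (fun B => \max_(s <- permutations (undup B)) vDelta s) (branches_size T).
have Hsz : (0 < size (permutations (undup B)))%N.
  by rewrite -has_predT; apply/hasP; exists (undup B); rewrite // mem_permutations.
have [s Hs Es] := @bigmax_attained _ (permutations (undup B)) (@vDelta k) Hsz.
have Hps : perm_eq s (undup B) by rewrite -mem_permutations.
rewrite /Psi EB Es.
set L := [seq (true, Y) | Y <- s].
have HLint : Lint L = s.
  by rewrite /Lint /L filter_map /= filter_predT -map_comp map_id.
have HvD : vDelta s = vD set0 L by rewrite /vDelta vDelta_vD.
have HlT : label T = pathk k by [].
have HTne : label T != set0.
  by rewrite HlT; apply/set0Pn; exists (Ordinal k0); rewrite inE.
have Hmain := main i0 nt0 ntn (L := L) (A := A) HTne.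
have Hval : valid T L by exists B; [exact: branches_gbr | rewrite HLint].
rewrite HlT in Hmain; have {}Hmain := Hmain Hval HA.
rewrite HvD; apply: le_trans Hmain; apply: ler_wpM2l; first by rewrite exprn_ge0 // ltW.
set D := verts (pathk k).
have Htop : #|A|%:R <= n%:R ^+ #|D :\: set0| * W R set0 L A.
  apply: W_top => //.
  - by rewrite /L all_map; apply/allP.
  - by move=> a aA; apply: rel_dom (proj1 HA) aA.
  - by move=> a b _ _ v; rewrite inE.
  - apply/subsetP=> v; rewrite /D inE => /existsP[j /andP[jG Hv]].
    rewrite -HlT in jG; have [Y YB jY] := branches_cover HB jG.
    rewrite set0U /VL bigcup_seq; apply/bigcupP; exists (true, Y).
      by apply/mapP; exists Y; rewrite // (perm_mem Hps) mem_undup.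
    by rewrite /= inE; apply/existsP; exists j; rewrite jY.
  - move=> p /mapP[Y Ys ->] /=; apply: verts_sub; rewrite -HlT.
    apply: (gbr_sub (branches_gbr HB)).
    by rewrite -mem_undup -(perm_mem Hps).
rewrite setD0 in Htop.
rewrite /mu ler_pdivrMr; first by rewrite mulrC.
by rewrite exprn_gt0 // ltr0n.
Qed.
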